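(* Let $\mathcal{S}\subset\mathbb{R}^d$ be a smooth, closed one-dimensional manifold of arclength $L>0$, parameterized by arclength $s$, so that functions on $\mathcal{S}$ are identified with $L$-periodic functions on $\mathbb{R}$. Let $c>0$ and let $f$ be a continuous $L$-periodic function, and let $u$ be the unique $L$-periodic solution of $(c-\frac{\mathrm{d}^2}{\mathrm{d}s^2})u=f$ on $\mathbb{R}$. Let $\mathcal{S}_1=[a_1,b_1]$ and $\mathcal{S}_2=[a_2,b_2]$ be overlapping subdomains with $a_1<0$ and $b_2>L$. Set $\ell_1=b_1-a_1$, $\ell_2=b_2-a_2$, and define the overlaps $\delta_1=b_1-a_2>0$ and $\delta_2=b_2-(a_1+L)>0$. Assume $0<\delta_1+\delta_2<\min\{\ell_1,\ell_2\}$. Starting from arbitrary continuous initial functions $u_1^0$ on $\mathcal{S}_1$ and $u_2^0$ on $\mathcal{S}_2$, define for $n=0,1,2,\dots$ the parallel Schwarz iterates $u_1^{n+1}$ on $\mathcal{S}_1$ and $u_2^{n+1}$ on $\mathcal{S}_2$ as the solutions of $$\begin{cases}(c-\frac{\mathrm{d}^2}{\mathrm{d}s^2})u_1^{n+1}=f &\text{in } (a_1,b_1),\\ u_1^{n+1}(a_1)=u_2^n(a_1+L),\\ u_1^{n+1}(b_1)=u_2^n(b_1),\end{cases}\qquad \begin{cases}(c-\frac{\mathrm{d}^2}{\mathrm{d}s^2})u_2^{n+1}=f &\text{in } (a_2,b_2),\\ u_2^{n+1}(a_2)=u_1^n(a_2),\\ u_2^{n+1}(b_2)=u_1^n(b_2-L).\end{cases}$$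 Then the iteration converges globally: for every choice of initial functions, $\max_{s\in\mathcal{S}_j}|u_j^n(s)-u(s)|\to 0$ as $n\to\infty$ for $j=1,2$.
   Context: This iteration is the continuous (mesh size $h\to 0$) limit of the parallel Schwarz / restricted additive Schwarz solver applied to the closest point method discretization of the surface intrinsic positive Helmholtz equation $(c-\Delta_{\mathcal{S}})u=f$ on the curve $\mathcal{S}$; on a one-dimensional manifold parameterized by arclength, $\Delta_{\mathcal{S}}=\mathrm{d}^2/\mathrm{d}s^2$. Since $a_1<0$ and $b_2>L$, the subdomain intervals extend beyond $[0,L]$ and $f$ is evaluated through its $L$-periodic extension. The boundary points used in the transmission conditions satisfy $a_1+L,\,b_1\in\mathcal{S}_2$ and $a_2,\,b_2-L\in\mathcal{S}_1$ under the stated assumptions. *)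

(* Defs.v *)
From Stdlib Require Import Reals.
From Coquelicot Require Import Coquelicot.
Open Scope R_scope.

Definition periodic (L : R) (g : R -> R) : Prop :=
  forall x, g (x + L) = g x.

Definition continuous_on_closed (g : R -> R) (a b : R) : Prop :=
  forall x, a <= x <= b ->
    forall eps, 0 < eps -> exists delta, 0 < delta /\
      forall y, a <= y <= b -> Rabs (y - x) < delta -> Rabs (g y - g x) < eps.

Definition helmholtz_at (c : R) (f g : R -> R) (x : R) : Prop :=
  ex_derive g x /\ ex_derive (Derive g) x /\
  c * g x - Derive (Derive g) x = f x.

Definition helmholtz_on (c : R) (f g : R -> R) (a b : R) : Prop :=
  continuous_on_closed g a b /\
  (forall x, a < x < b -> helmholtz_at c f g x).

(* Main.v *)
Require Import Defs.
From Stdlib Require Import Reals Lra.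
From Coquelicot Require Import Coquelicot.
Open Scope R_scope.

Lemma cont_glob (k : R -> R) a b : (forall x, continuous k x) -> continuous_on_closed k a b.
Proof.
  intros Hk x _ eps Heps.
  assert (H := proj2 (continuity_pt_filterlim k x) (Hk x)).
  apply continuity_pt_locally with (eps := mkposreal eps Heps) in H.
  destruct H as [del Hd]. exists del. split. apply cond_pos.
  intros y _ Hy. apply (Hd y). exact Hy.
Qed.

Lemma cont_lin (g k : R -> R) a b s : continuous_on_closed g a b -> continuous_on_closed k a b ->
  continuous_on_closed (fun x => s * g x - k x) a b.
Proof.
  intros Hg Hk x Hx eps Heps.
  destruct (Hg x Hx (eps / 2 / (Rabs s + 1))) as [d1 [Hd1 H1]].
  { apply Rdiv_lt_0_compat; [lra|]. pose proof (Rabs_pos s); lra. }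
  destruct (Hk x Hx (eps / 2)) as [d2 [Hd2 H2]]. lra.
  exists (Rmin d1 d2). split. apply Rmin_glb_lt; auto.
  intros y Hy Hyx.
  assert (A1 := H1 y Hy (Rlt_le_trans _ _ _ Hyx (Rmin_l _ _))).
  assert (A2 := H2 y Hy (Rlt_le_trans _ _ _ Hyx (Rmin_r _ _))).
  replace (s * g y - k y - (s * g x - k x)) with (s * (g y - g x) - (k y - k x)) by ring.
  eapply Rle_lt_trans. apply Rabs_triang. rewrite Rabs_Ropp, Rabs_mult.
  assert (Rabs s * Rabs (g y - g x) <= eps / 2).
  { pose proof (Rabs_pos s). pose proof (Rabs_pos (g y - g x)).
    assert (Rabs s * Rabs (g y - g x) <= (Rabs s + 1) * (eps / 2 / (Rabs s + 1))) by nra.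
    replace ((Rabs s + 1) * (eps / 2 / (Rabs s + 1))) with (eps/2) in H3 by (field; lra). lra. }
  lra.
Qed.

Lemma clamp_prop a b y z : a <= b -> a <= z <= b ->
  a <= Rmax a (Rmin b y) <= b /\ Rabs (Rmax a (Rmin b y) - z) <= Rabs (y - z).
Proof.
  intros. unfold Rmax, Rmin. repeat destruct Rle_dec; split; try split; try lra;
  unfold Rabs; repeat destruct Rcase_abs; lra.
Qed.

Lemma maxp (c a b : R) (h h1 h2 : R -> R) :
  0 < c -> a < b -> continuous_on_closed h a b ->
  (forall x, a < x < b -> is_derive h x (h1 x) /\ is_derive h1 x (h2 x) /\ c * h x <= h2 x) ->
  h a <= 0 -> h b <= 0 -> forall x, a <= x <= b -> h x <= 0.
Proof.
  intros Hc Hab Hcont Hd Ha Hb x Hx.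
  set (H := fun y => h (Rmax a (Rmin b y))).
  assert (HH : forall y, a <= y <= b -> H y = h y).
  { intros y Hy. unfold H. f_equal. unfold Rmax, Rmin. repeat destruct Rle_dec; lra. }
  assert (HC : forall z, a <= z <= b -> continuity_pt H z).
  { intros z Hz. apply continuity_pt_locally. intros eps.
    destruct (Hcont z Hz eps (cond_pos eps)) as [del [Hdel Hd']].
    exists (mkposreal del Hdel). intros y Hy. change (Rabs (y - z) < del) in Hy.
    rewrite (HH z Hz). unfold H.
    destruct (clamp_prop a b y z) as [P1 P2]; try lra.
    apply Hd'; auto. lra. }
  destruct (continuity_ab_maj H a b (Rlt_le _ _ Hab) HC) as [x0 [Hmax Hx0]].
  destruct (Rle_dec (h x) 0) as [|Hn]; auto. exfalso.
  apply Rnot_le_lt in Hn.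
  assert (Hmx : forall y, a <= y <= b -> h y <= h x0).
  { intros y Hy. rewrite <- (HH y Hy), <- (HH x0 Hx0). auto. }
  assert (Hpos : 0 < h x0) by (pose proof (Hmx x Hx); lra).
  assert (Hin : a < x0 < b).
  { destruct Hx0 as [[|]  [|]]; subst; try lra. }
  destruct (Hd x0 Hin) as [_ [D2 Hc2]].
  set (d := h2 x0). assert (Hdp : 0 < d) by (unfold d; nra).
  apply is_derive_Reals in D2.
  destruct (D2 (d/2)) as [del Hdel]. lra.
  set (r := Rmin (del/2) (Rmin ((x0-a)/2) ((b-x0)/2))).
  assert (Hr : 0 < r).
  { unfold r. pose proof (cond_pos del). repeat apply Rmin_glb_lt; lra. }
  assert (Hr1 : r < del) by (unfold r; pose proof (cond_pos del); pose proof (Rmin_l (del/2) (Rmin ((x0-a)/2) ((b-x0)/2))); lra).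
  assert (Hr2 : r <= (x0-a)/2) by (unfold r; eapply Rle_trans; [apply Rmin_r| apply Rmin_l]).
  assert (Hr3 : r <= (b-x0)/2) by (unfold r; eapply Rle_trans; [apply Rmin_r| apply Rmin_r]).
  assert (Hdl : forall t, x0 - r <= t <= x0 + r -> derivable_pt_lim h t (h1 t)).
  { intros t Ht. apply is_derive_Reals. apply (Hd t). lra. }
  assert (Hq : forall t, 0 < Rabs (t - x0) < r -> (h1 t - h1 x0) / (t - x0) > d/2).
  { intros t Ht. assert (t - x0 <> 0) by (intro E; rewrite E, Rabs_R0 in Ht; lra).
    assert (Hx1 := Hdel (t - x0) H0 (Rlt_trans _ _ _ (proj2 Ht) Hr1)).
    replace (x0 + (t - x0)) with t in Hx1 by ring.
    apply Rabs_def2 in Hx1. fold d in Hx1. destruct Hx1. lra. }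
  destruct (Rle_dec 0 (h1 x0)) as [Hs|Hs].
  - destruct (MVT_cor2 h h1 x0 (x0 + r)) as [xi [Exi Hxi]]. lra.
    { intros t Ht. apply Hdl. lra. }
    assert (Hq' := Hq xi). rewrite Rabs_right in Hq' by lra.
    specialize (Hq' ltac:(lra)).
    assert (h1 xi - h1 x0 > 0).
    { assert (h1 xi - h1 x0 = (h1 xi - h1 x0) / (xi - x0) * (xi - x0)) by (field; lra). nra. }
    assert (h (x0 + r) - h x0 > 0) by nra.
    pose proof (Hmx (x0 + r) ltac:(lra)). lra.
  - destruct (MVT_cor2 h h1 (x0 - r) x0) as [xi [Exi Hxi]]. lra.
    { intros t Ht. apply Hdl. lra. }
    assert (Hq' := Hq xi). rewrite Rabs_left in Hq' by lra.
    specialize (Hq' ltac:(lra)).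
    assert (h1 xi - h1 x0 < 0).
    { assert (h1 xi - h1 x0 = (h1 xi - h1 x0) / (xi - x0) * (xi - x0)) by (field; lra). nra. }
    assert (h x0 - h (x0 - r) < 0) by nra.
    pose proof (Hmx (x0 - r) ltac:(lra)). lra.
Qed.

Definition beta c a b := c / (2 + c * ((b-a)*(b-a))).
Definition fac c a b x := 1 + beta c a b * ((x-a)*(x-b)).

Lemma facprop c a b x : 0 < c -> a < b -> a <= x <= b ->
  2 * beta c a b <= c * fac c a b x /\ fac c a b x <= 1 /\ 0 <= fac c a b x /\
  (a < x < b -> fac c a b x < 1).
Proof.
  intros Hc Hab Hx. unfold fac.
  set (B := (b-a)*(b-a)). set (p := (x-a)*(b-x)).
  assert (HB : 0 < B) by (unfold B; nra).
  assert (Hp0 : 0 <= p) by (unfold p; nra).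
  assert (HpB : p <= B) by (unfold p, B; nra).
  assert (Hbe : beta c a b * (2 + c * B) = c) by (unfold beta; fold B; field; nra).
  assert (Hb0 : 0 < beta c a b) by (unfold beta; fold B; apply Rdiv_lt_0_compat; nra).
  replace ((x-a)*(x-b)) with (-p) by (unfold p; ring).
  split; [|split; [|split]].
  - assert (0 <= beta c a b * c * (B - p)) by (apply Rmult_le_pos; nra). nra.
  - assert (0 <= beta c a b * p) by (apply Rmult_le_pos; nra). nra.
  - assert (beta c a b * B < 1) by nra.
    assert (beta c a b * p <= beta c a b * B) by (apply Rmult_le_compat_l; nra). nra.
  - intros Hx'. assert (0 < p) by (unfold p; nra). nra.
Qed.

Lemma deriv_w c a b M x : is_derive (fun y => M * fac c a b y) x (M * beta c a b * (2*x - a - b)).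
Proof. unfold fac. auto_derive; auto. ring. Qed.
Lemma deriv_w1 c a b M x : is_derive (fun y => M * beta c a b * (2*y - a - b)) x (M * beta c a b * 2).
Proof. auto_derive; auto. ring. Qed.

Lemma comb (g : R -> R) k s x dg dk : is_derive g x dg -> is_derive k x dk ->
  is_derive (fun y => s * g y - k y) x (s * dg - dk).
Proof.
  intros H1 H2. exact (is_derive_minus (fun y => s * g y) k x (s*dg) dk (is_derive_scal _ _ _ _ H1) H2).
Qed.

Lemma bound c a b M (g g1 g2 : R -> R) : 0 < c -> a < b -> continuous_on_closed g a b ->
  (forall x, a < x < b -> is_derive g x (g1 x) /\ is_derive g1 x (g2 x) /\ g2 x = c * g x) ->
  Rabs (g a) <= M -> Rabs (g b) <= M -> forall x, a <= x <= b -> Rabs (g x) <= M * fac c a b x.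
Proof.
  intros Hc Hab Hg Hd Ha Hb x Hx.
  assert (HM : 0 <= M) by (pose proof (Rabs_pos (g a)); lra).
  assert (key : forall s, (s = 1 \/ s = -1) -> s * g x <= M * fac c a b x).
  { intros s Hs.
    assert (Hm := maxp c a b (fun y => s * g y - M * fac c a b y)
      (fun y => s * g1 y - M * beta c a b * (2*y - a - b))
      (fun y => s * g2 y - M * beta c a b * 2) Hc Hab).
    cut ((fun y => s * g y - M * fac c a b y) x <= 0). { simpl. lra. }
    apply Hm; auto.
    - apply cont_lin; auto. apply cont_glob. intros y.
      apply (ex_derive_continuous (fun y => M * fac c a b y)). eexists. apply deriv_w.
    - intros y Hy. destruct (Hd y Hy) as [D1 [D2 E]]. split; [|split].
      + apply comb; auto. apply deriv_w.
      + apply comb; auto. apply deriv_w1.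
      + destruct (facprop c a b y Hc Hab ltac:(lra)) as [F1 _].
        rewrite E. nra.
    - cbv beta. unfold fac. replace ((a-a)*(a-b)) with 0 by ring. rewrite Rmult_0_r, Rplus_0_r, Rmult_1_r.
      destruct Hs; subst; unfold Rabs in *; repeat destruct Rcase_abs; lra.
    - cbv beta. unfold fac. replace ((b-a)*(b-b)) with 0 by ring. rewrite Rmult_0_r, Rplus_0_r, Rmult_1_r.
      destruct Hs; subst; unfold Rabs in *; repeat destruct Rcase_abs; lra. }
  pose proof (key 1 (or_introl eq_refl)). pose proof (key (-1) (or_intror eq_refl)).
  unfold Rabs; destruct Rcase_abs; lra.
Qed.

Lemma cont_sub (g k : R -> R) a b : continuous_on_closed g a b -> continuous_on_closed k a b ->
  continuous_on_closed (fun x => g x - k x) a b.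
Proof.
  intros Hg Hk. assert (H := cont_lin g k a b 1 Hg Hk).
  intros x Hx e He. destruct (H x Hx e He) as [d [Hd Hd']]. exists d; split; auto.
  intros y Hy Hyx. specialize (Hd' y Hy Hyx). rewrite !Rmult_1_l in Hd'. exact Hd'.
Qed.

Lemma final (err : nat -> R -> R) (P : R -> Prop) q K :
  (forall m s, P s -> err (S m) s <= q ^ m * K) -> 0 <= q < 1 -> 0 <= K ->
  forall eps, 0 < eps -> exists N : nat, forall n, (N <= n)%nat -> forall s, P s -> err n s <= eps.
Proof.
  intros H Hq HK eps Heps.
  destruct (pow_lt_1_zero q ltac:(rewrite Rabs_right; lra) (eps / (K + 1))) as [N HN].
  { apply Rdiv_lt_0_compat; lra. }
  exists (S N). intros n Hn s Hs. destruct n as [|m]. { inversion Hn. }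
  eapply Rle_trans. apply H; auto.
  assert (Hm : (m >= N)%nat) by (apply le_S_n; exact Hn).
  specialize (HN m Hm). rewrite Rabs_right in HN by (apply Rle_ge, pow_le; lra).
  assert (q ^ m * K <= eps / (K + 1) * K) by (apply Rmult_le_compat_r; lra).
  assert (eps / (K + 1) * K = eps - eps / (K+1)) by (field; lra).
  assert (0 < eps / (K+1)) by (apply Rdiv_lt_0_compat; lra).
  lra.
Qed.
Theorem theorem2
  (L c : R) (f u : R -> R) (a1 b1 a2 b2 : R)
  (u1 u2 : nat -> R -> R)
  (HL : 0 < L) (Hc : 0 < c)
  (Hfcont : forall x, continuous f x) (Hfper : periodic L f)
  (Huper : periodic L u) (Hu : forall x, helmholtz_at c f u x)
  (Ha1 : a1 < 0) (Hb2 : L < b2)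
  (Hd1 : 0 < b1 - a2) (Hd2 : 0 < b2 - (a1 + L))
  (Hd12 : 0 < (b1 - a2) + (b2 - (a1 + L)))
  (Hd12' : (b1 - a2) + (b2 - (a1 + L)) < Rmin (b1 - a1) (b2 - a2))
  (H10 : continuous_on_closed (u1 O) a1 b1)
  (H20 : continuous_on_closed (u2 O) a2 b2)
  (H1 : forall n, helmholtz_on c f (u1 (S n)) a1 b1 /\
                  u1 (S n) a1 = u2 n (a1 + L) /\
                  u1 (S n) b1 = u2 n b1)
  (H2 : forall n, helmholtz_on c f (u2 (S n)) a2 b2 /\
                  u2 (S n) a2 = u1 n a2 /\
                  u2 (S n) b2 = u1 n (b2 - L)) :
  (forall eps, 0 < eps -> exists N : nat, forall n, (N <= n)%nat ->
     forall s, a1 <= s <= b1 -> Rabs (u1 n s - u s) <= eps) /\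
  (forall eps, 0 < eps -> exists N : nat, forall n, (N <= n)%nat ->
     forall s, a2 <= s <= b2 -> Rabs (u2 n s - u s) <= eps).
Proof.
  pose proof (Rmin_l (b1 - a1) (b2 - a2)). pose proof (Rmin_r (b1 - a1) (b2 - a2)).
  assert (G1 : a1 < b1) by lra. assert (G2 : a2 < b2) by lra.
  assert (Gu : forall x, continuous u x).
  { intros x. apply (ex_derive_continuous u). apply (Hu x). }
  set (A := fun n => u2 n (a1+L) - u (a1+L)).
  set (B := fun n => u2 n b1 - u b1).
  set (C := fun n => u1 n a2 - u a2).
  set (D := fun n => u1 n (b2-L) - u (b2-L)).
  set (Mx := fun n => Rmax (Rmax (Rabs (A n)) (Rabs (B n))) (Rmax (Rabs (C n)) (Rabs (D n)))).
  set (q := Rmax (Rmax (fac c a1 b1 a2) (fac c a1 b1 (b2-L))) (Rmax (fac c a2 b2 (a1+L)) (fac c a2 b2 b1))).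
  assert (E1 : forall n s, a1 <= s <= b1 -> Rabs (u1 (S n) s - u s) <= Rmax (Rabs (A n)) (Rabs (B n)) * fac c a1 b1 s).
  { intros n s Hs. destruct (H1 n) as [[Hc1 Hh1] [Ea Eb]].
    apply (bound c a1 b1 _ (fun x => u1 (S n) x - u x)
      (fun x => Derive (u1 (S n)) x - Derive u x)
      (fun x => Derive (Derive (u1 (S n))) x - Derive (Derive u) x)); auto.
    - apply cont_sub; auto. apply cont_glob; auto.
    - intros x Hx. destruct (Hh1 x Hx) as [P1 [P2 P3]]. destruct (Hu x) as [Q1 [Q2 Q3]].
      split; [|split].
      + exact (is_derive_minus _ _ _ _ _ (Derive_correct _ _ P1) (Derive_correct _ _ Q1)).
      + exact (is_derive_minus _ _ _ _ _ (Derive_correct _ _ P2) (Derive_correct _ _ Q2)).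
      + lra.
    - rewrite Ea. rewrite <- (Huper a1). fold (A n). apply Rmax_l.
    - rewrite Eb. fold (B n). apply Rmax_r. }
  assert (E2 : forall n s, a2 <= s <= b2 -> Rabs (u2 (S n) s - u s) <= Rmax (Rabs (C n)) (Rabs (D n)) * fac c a2 b2 s).
  { intros n s Hs. destruct (H2 n) as [[Hc1 Hh1] [Ea Eb]].
    apply (bound c a2 b2 _ (fun x => u2 (S n) x - u x)
      (fun x => Derive (u2 (S n)) x - Derive u x)
      (fun x => Derive (Derive (u2 (S n))) x - Derive (Derive u) x)); auto.
    - apply cont_sub; auto. apply cont_glob; auto.
    - intros x Hx. destruct (Hh1 x Hx) as [P1 [P2 P3]]. destruct (Hu x) as [Q1 [Q2 Q3]].
      split; [|split].
      + exact (is_derive_minus _ _ _ _ _ (Derive_correct _ _ P1) (Derive_correct _ _ Q1)).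
      + exact (is_derive_minus _ _ _ _ _ (Derive_correct _ _ P2) (Derive_correct _ _ Q2)).
      + lra.
    - rewrite Ea. fold (C n). apply Rmax_l.
    - rewrite Eb. replace (u b2) with (u (b2 - L)).
      + fold (D n). apply Rmax_r.
      + rewrite <- (Huper (b2 - L)). f_equal. ring. }
  assert (Fq : forall a b x, a < x < b -> 0 <= fac c a b x < 1).
  { intros a b x Hx. destruct (facprop c a b x Hc ltac:(lra) ltac:(lra)) as [_ [F2 [F3 F4]]].
    split; auto. }
  assert (Fc : forall a b x, a < b -> a <= x <= b -> fac c a b x <= 1).
  { intros a b x Hab Hx. destruct (facprop c a b x Hc Hab Hx) as [_ [F2 _]]. auto. }
  assert (Fa := Fq a1 b1 a2 ltac:(lra)).
  assert (Fb := Fq a1 b1 (b2-L) ltac:(lra)).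
  assert (Fc' := Fq a2 b2 (a1+L) ltac:(lra)).
  assert (Fd := Fq a2 b2 b1 ltac:(lra)).
  assert (Hq : 0 <= q < 1).
  { unfold q. split.
    - eapply Rle_trans; [|apply Rmax_l]. eapply Rle_trans; [|apply Rmax_l]. lra.
    - repeat apply Rmax_lub_lt; lra. }
  assert (Mpos : forall n, 0 <= Mx n).
  { intros n. unfold Mx. eapply Rle_trans; [|apply Rmax_l]. eapply Rle_trans; [|apply Rmax_l]. apply Rabs_pos. }
  assert (MAB : forall n, Rmax (Rabs (A n)) (Rabs (B n)) <= Mx n) by (intros; apply Rmax_l).
  assert (MCD : forall n, Rmax (Rabs (C n)) (Rabs (D n)) <= Mx n) by (intros; apply Rmax_r).
  assert (ABpos : forall n, 0 <= Rmax (Rabs (A n)) (Rabs (B n))).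
  { intros n. eapply Rle_trans; [|apply Rmax_l]. apply Rabs_pos. }
  assert (CDpos : forall n, 0 <= Rmax (Rabs (C n)) (Rabs (D n))).
  { intros n. eapply Rle_trans; [|apply Rmax_l]. apply Rabs_pos. }
  assert (Hqa : fac c a1 b1 a2 <= q) by (unfold q; eapply Rle_trans; [apply Rmax_l|apply Rmax_l]).
  assert (Hqb : fac c a1 b1 (b2-L) <= q) by (unfold q; eapply Rle_trans; [apply Rmax_r|apply Rmax_l]).
  assert (Hqc : fac c a2 b2 (a1+L) <= q) by (unfold q; eapply Rle_trans; [apply Rmax_l|apply Rmax_r]).
  assert (Hqd : fac c a2 b2 b1 <= q) by (unfold q; eapply Rle_trans; [apply Rmax_r|apply Rmax_r]).
  assert (step : forall n, Mx (S n) <= q * Mx n).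
  { intros n.
    assert (S1 : forall v x, Rabs v <= Rmax (Rabs (A n)) (Rabs (B n)) * x -> 0 <= x -> x <= q -> Rabs v <= q * Mx n).
    { intros v x Hv Hx0 Hxq. pose proof (MAB n). pose proof (ABpos n). pose proof (Mpos n).
      assert (Rmax (Rabs (A n)) (Rabs (B n)) * x <= Mx n * q) by (apply Rmult_le_compat; lra). lra. }
    assert (S2 : forall v x, Rabs v <= Rmax (Rabs (C n)) (Rabs (D n)) * x -> 0 <= x -> x <= q -> Rabs v <= q * Mx n).
    { intros v x Hv Hx0 Hxq. pose proof (MCD n). pose proof (CDpos n). pose proof (Mpos n).
      assert (Rmax (Rabs (C n)) (Rabs (D n)) * x <= Mx n * q) by (apply Rmult_le_compat; lra). lra. }
    unfold Mx at 1. repeat apply Rmax_lub.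
    - apply (S2 _ (fac c a2 b2 (a1+L))); try lra. apply E2. lra.
    - apply (S2 _ (fac c a2 b2 b1)); try lra. apply E2. lra.
    - apply (S1 _ (fac c a1 b1 a2)); try lra. apply E1. lra.
    - apply (S1 _ (fac c a1 b1 (b2-L))); try lra. apply E1. lra. }
  assert (ind : forall n, Mx n <= q ^ n * Mx O).
  { induction n. simpl. lra. simpl. pose proof (step n). nra. }
  split.
  - apply (final (fun n s => Rabs (u1 n s - u s)) (fun s => a1 <= s <= b1) q (Mx O)); auto.
    intros m s Hs. eapply Rle_trans. apply E1; auto.
    pose proof (Fc a1 b1 s G1 Hs). destruct (facprop c a1 b1 s Hc G1 Hs) as [_ [_ [F0 _]]].
    pose proof (MAB m). pose proof (ABpos m). pose proof (ind m).
    assert (Rmax (Rabs (A m)) (Rabs (B m)) * fac c a1 b1 s <= Mx m * 1) by (apply Rmult_le_compat; lra). lra.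
  - apply (final (fun n s => Rabs (u2 n s - u s)) (fun s => a2 <= s <= b2) q (Mx O)); auto.
    intros m s Hs. eapply Rle_trans. apply E2; auto.
    pose proof (Fc a2 b2 s G2 Hs). destruct (facprop c a2 b2 s Hc G2 Hs) as [_ [_ [F0 _]]].
    pose proof (MCD m). pose proof (CDpos m). pose proof (ind m).
    assert (Rmax (Rabs (C m)) (Rabs (D m)) * fac c a2 b2 s <= Mx m * 1) by (apply Rmult_le_compat; lra). lra.
Qed.
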